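(* Let $\Omega\subseteq\mathbb{R}^d$ be a nonempty open convex set and let $F:\Omega\to\mathbb{R}$ be a function of Legendre type, with Bregman divergence $D_F$. Then for every $q\in\Omega$ and every $r\ge 0$, both the primal Bregman ball $B_F(q;r)=\{y\in\Omega: D_F(q\|y)\le r\}$ and the dual Bregman ball $B'_F(q;r)=\{y\in\Omega: D_F(y\|q)\le r\}$ are connected subsets of $\mathbb{R}^d$.
   Context: A function $F:\Omega\to\mathbb{R}$ on a nonempty open convex set $\Omega\subseteq\mathbb{R}^d$ is of Legendre type if (I) it is differentiable, (II) it is strictly convex, and (III) if the boundary $\partial\Omega$ is nonempty, then $\|\nabla F(x)\|\to\infty$ as $x\to\partial\Omega$. The Bregman divergence generated by $F$ is $D_F:\Omega\times\Omega\to\mathbb{R}$, $D_F(x\|y)=F(x)-F(y)-\langle\nabla F(y),x-y\rangle$. *)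

(* Defs.v *)
From HB Require Import structures.
From mathcomp Require Import all_boot all_order all_algebra.
From mathcomp Require Import all_classical all_reals all_analysis.
Set Implicit Arguments. Unset Strict Implicit. Unset Printing Implicit Defensive.
Import Order.TTheory GRing.Theory Num.Theory.
Import numFieldNormedType.Exports.
Local Open Scope classical_set_scope.
Local Open Scope ring_scope.

Definition dotv (R : realType) (d : nat) (u v : 'rV[R]_d) : R :=
  \sum_(i < d) u 0 i * v 0 i.

Definition grad (R : realType) (d : nat) (F : 'rV[R]_d -> R) (x : 'rV[R]_d)
  : 'rV[R]_d := \row_(i < d) ('d F x (delta_mx 0 i : 'rV[R]_d)).

(* F : Omega -> R (values of F outside Omega are irrelevant) is of Legendre type *)
Definition legendre_type (R : realType) (d : nat) (Omega : set 'rV[R]_d)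
  (F : 'rV[R]_d -> R) : Prop :=
  (forall x, Omega x -> differentiable F x) /\
  (forall x y (t : R), Omega x -> Omega y -> x != y -> 0 < t < 1 ->
     F (t *: x + (1 - t) *: y) < t * F x + (1 - t) * F y) /\
  (forall b, closure Omega b -> ~ Omega b ->
     forall M : R, \forall x \near b, Omega x -> M < `|grad F x|).

Definition bregman (R : realType) (d : nat) (F : 'rV[R]_d -> R) (x y : 'rV[R]_d) : R :=
  F x - F y - dotv (grad F y) (x - y).

Definition primal_ball (R : realType) (d : nat) (Omega : set 'rV[R]_d)
  (F : 'rV[R]_d -> R) (q : 'rV[R]_d) (r : R) : set 'rV[R]_d :=
  [set y | Omega y /\ bregman F q y <= r].

Definition dual_ball (R : realType) (d : nat) (Omega : set 'rV[R]_d)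
  (F : 'rV[R]_d -> R) (q : 'rV[R]_d) (r : R) : set 'rV[R]_d :=
  [set y | Omega y /\ bregman F y q <= r].

(* Main.v *)
Require Import Defs.
From HB Require Import structures.
From mathcomp Require Import all_boot all_order all_algebra.
From mathcomp Require Import all_classical all_reals all_analysis.
From mathcomp Require Import ring lra.
Import Order.TTheory GRing.Theory Num.Theory.
Import numFieldNormedType.Exports.
Local Open Scope classical_set_scope.
Local Open Scope ring_scope.

Lemma conv_mem (R : realType) (d : nat) (Omega : set 'rV[R]_d) a q (l : R) :
  convex_set Omega -> Omega a -> Omega q -> 0 <= l -> l <= 1 ->
  Omega (l *: a + (1 - l) *: q).
Proof.
move=> cO Ha Hq l0 l1.
have := cO a q (Itv01 l0 l1) (mem_set Ha) (mem_set Hq).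
rewrite inE /=.
done.
Qed.

Lemma dot_diff (R : realType) (d : nat) (F : 'rV[R]_d -> R) y w :
  dotv (grad F y) w = 'd F y w.
Proof.
rewrite /dotv /grad {2}(row_sum_delta w) linear_sum; apply: eq_bigr => i _.
by rewrite mxE linearZ /= mulrC.
Qed.

Lemma grad_ineq (R : realType) (d : nat) (Omega : set 'rV[R]_d)
  (F : 'rV[R]_d -> R) y z :
  (forall x y (t : R), Omega x -> Omega y -> x != y -> 0 < t < 1 ->
     F (t *: x + (1 - t) *: y) < t * F x + (1 - t) * F y) ->
  Omega y -> Omega z -> differentiable F y ->
  'd F y (z - y) <= F z - F y.
Proof.
move=> sc Hy Hz dF.
have [->|zy] := eqVneq z y; first by rewrite !subrr linear0.
rewrite -deriveE //.
have dv : derivable F y (z - y) by exact: diff_derivable.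
have := cvg_dnbhs_at_right dv.
move=> /cvgr_to_le; apply.
near=> h.
have h0 : 0 < h by near: h; exact: nbhs_right_gt.
have h1 : h < 1 by near: h; exact: nbhs_right_lt.
rewrite /= /shift /=.
have -> : h *: (z - y) + y = h *: z + (1 - h) *: y.
  by rewrite scalerBr scalerBl scale1r addrA addrAC.
have := sc z y h Hz Hy zy; rewrite h0 h1 => /(_ isT) lt.
rewrite ler_pdivrMl //.
move: lt; set a := F (_ + _) => lt.
rewrite -subr_ge0.
have -> : h * (F z - F y) - (a - F y) = (h * F z + (1 - h) * F y) - a by ring.
by rewrite subr_ge0 ltW.
Unshelve. all: by end_near. Qed.

Lemma star_connected (R: realType) d (A : set 'rV[R]_d) q : A q ->
  (forall a l, A a -> 0 <= l -> l <= 1 -> A (q + l *: (a - q))) -> connected A.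
Proof.
move=> Aq st.
pose seg a := (fun t : R => q + t *: (a - q)) @` `[0, 1].
have -> : A = \bigcup_(a in A) seg a.
  apply/seteqP; split.
  - move=> a Aa; exists a => //; exists 1; first by rewrite /= in_itv /= lexx ler01.
    by rewrite scale1r addrC subrK.
  - move=> x [a Aa [t]]; rewrite /= in_itv /= => /andP[t0 t1] <-; exact: st.
apply: bigcup_connected.
  exists q => a Aa; exists 0; first by rewrite /= in_itv /= lexx ler01.
  by rewrite scale0r addr0.
move=> a Aa; apply: connected_continuous_connected; first exact: segment_connected.
apply: continuous_subspaceT => t.
apply: cvgD; first exact: cvg_cst.
by apply: cvgZr_tmp; exact: cvg_id.
Qed.

Definition Dd (R : realType) (d : nat) (F : 'rV[R]_d -> R) (y w : 'rV[R]_d) : R :=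
  'd F y w.
Arguments Dd {R d}.

Lemma bregmanE (R : realType) (d : nat) (F : 'rV[R]_d -> R) x y :
  bregman F x y = F x - F y - Dd F y (x - y).
Proof. by rewrite /bregman dot_diff. Qed.

Lemma dZ (R : realType) (d : nat) (F : 'rV[R]_d -> R) y (k : R) w :
  Dd F y (k *: w) = k * Dd F y w.
Proof. by rewrite /Dd linearZ. Qed.

Lemma grad_ineq' (R : realType) (d : nat) (Omega : set 'rV[R]_d)
  (F : 'rV[R]_d -> R) y z :
  (forall x y (t : R), Omega x -> Omega y -> x != y -> 0 < t < 1 ->
     F (t *: x + (1 - t) *: y) < t * F x + (1 - t) * F y) ->
  Omega y -> Omega z -> differentiable F y ->
  Dd F y (z - y) <= F z - F y.
Proof. exact: grad_ineq. Qed.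

Lemma arith_primal (R : realType) (l fq fa fb ga gb : R) :
  0 <= l -> l < 1 -> (l - 1) * ga <= fb - fa -> (1 - l) * gb <= fa - fb ->
  fq - fb - (- l * gb) <= fq - fa - (-1 * ga).
Proof.
move=> l0 l1 i1 i2.
have gab : gb <= ga.
  have : (1 - l) * (gb - ga) <= 0 by lra.
  by rewrite pmulr_rle0 ?subr_gt0 // subr_le0.
have : l * gb <= l * ga by rewrite ler_wpM2l.
lra.
Qed.

Lemma primal_step (R : realType) (d : nat) (Omega : set 'rV[R]_d)
  (F : 'rV[R]_d -> R) q a (l : R) :
  (forall x y (t : R), Omega x -> Omega y -> x != y -> 0 < t < 1 ->
     F (t *: x + (1 - t) *: y) < t * F x + (1 - t) * F y) ->
  (forall x, Omega x -> differentiable F x) ->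
  Omega a -> Omega (q + l *: (a - q)) -> 0 <= l -> l < 1 ->
  bregman F q (q + l *: (a - q)) <= bregman F q a.
Proof.
move=> sc dif Ha Hb l0 l1.
have i1 := @grad_ineq' _ _ _ _ _ _ sc Ha Hb (dif _ Ha).
have i2 := @grad_ineq' _ _ _ _ _ _ sc Hb Ha (dif _ Hb).
rewrite !bregmanE.
have e1 : q + l *: (a - q) - a = (l - 1) *: (a - q).
  by rewrite scalerBl scale1r addrAC -(opprB a q) addrC.
have e2 : a - (q + l *: (a - q)) = (1 - l) *: (a - q).
  by rewrite -opprB e1 -scaleNr opprB.
have e3 : q - (q + l *: (a - q)) = (- l) *: (a - q).
  by rewrite opprD addrA subrr add0r scaleNr.
have e4 : q - a = (- 1) *: (a - q) by rewrite scaleN1r opprB.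
have E1 : Dd F a (q + l *: (a - q) - a) = (l - 1) * Dd F a (a - q).
  by rewrite e1; apply: dZ.
have E2 : Dd F (q + l *: (a - q)) (a - (q + l *: (a - q))) = (1 - l) * Dd F (q + l *: (a - q)) (a - q).
  by rewrite e2; apply: dZ.
have E3 : Dd F (q + l *: (a - q)) (q - (q + l *: (a - q))) = - l * Dd F (q + l *: (a - q)) (a - q).
  by rewrite e3; apply: dZ.
have E4 : Dd F a (q - a) = - 1 * Dd F a (a - q).
  by rewrite e4; apply: dZ.
rewrite E1 in i1; rewrite E2 in i2; rewrite E3 E4.
exact: arith_primal i1 i2.
Qed.

Lemma conv_le (R : realType) (d : nat) (Omega : set 'rV[R]_d)
  (F : 'rV[R]_d -> R) a q (l : R) :
  (forall x y (t : R), Omega x -> Omega y -> x != y -> 0 < t < 1 ->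
     F (t *: x + (1 - t) *: y) < t * F x + (1 - t) * F y) ->
  Omega a -> Omega q -> 0 <= l -> l <= 1 ->
  F (l *: a + (1 - l) *: q) <= l * F a + (1 - l) * F q.
Proof.
move=> sc Ha Hq l0 l1.
have [->|aq] := eqVneq a q.
  by rewrite -scalerDl -mulrDl addrC subrK scale1r mul1r.
have [->|ln0] := eqVneq l 0.
  by rewrite scale0r add0r subr0 scale1r mul0r add0r mul1r.
have [->|ln1] := eqVneq l 1.
  by rewrite subrr scale0r addr0 scale1r mul0r addr0 mul1r.
apply: ltW; apply: sc => //.
by rewrite lt_neqAle eq_sym ln0 l0 lt_neqAle ln1 l1.
Qed.

Lemma arith_dual (R : realType) (l fq fa fb g r : R) :
  0 <= l -> l <= 1 -> 0 <= r -> fb <= l * fa + (1 - l) * fq ->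
  fa - fq - g <= r -> fb - fq - l * g <= r.
Proof.
move=> l0 l1 r0 cv D.
have h1 : l * (fa - fq - g) <= l * r by rewrite ler_wpM2l.
have h2 : l * r <= r by rewrite ler_piMl.
lra.
Qed.

Lemma dual_step (R : realType) (d : nat) (Omega : set 'rV[R]_d)
  (F : 'rV[R]_d -> R) q a (l : R) (r : R) :
  (forall x y (t : R), Omega x -> Omega y -> x != y -> 0 < t < 1 ->
     F (t *: x + (1 - t) *: y) < t * F x + (1 - t) * F y) ->
  Omega a -> Omega q -> 0 <= l -> l <= 1 -> 0 <= r ->
  bregman F a q <= r -> bregman F (q + l *: (a - q)) q <= r.
Proof.
move=> sc Ha Hq l0 l1 r0.
have cv := @conv_le _ _ _ _ _ _ _ sc Ha Hq l0 l1.
have eqb : q + l *: (a - q) = l *: a + (1 - l) *: q.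
  by rewrite scalerBr scalerBl scale1r addrCA addrA.
rewrite -eqb in cv.
rewrite !bregmanE.
have E : Dd F q (q + l *: (a - q) - q) = l * Dd F q (a - q).
  by rewrite addrAC subrr add0r; apply: dZ.
rewrite E.
exact: arith_dual.
Qed.

Theorem lemma2 (R : realType) (d : nat) (Omega : set 'rV[R]_d)
  (F : 'rV[R]_d -> R) :
  Omega !=set0 -> open Omega -> convex_set Omega -> legendre_type Omega F ->
  forall (q : 'rV[R]_d) (r : R), Omega q -> 0 <= r ->
    connected (primal_ball Omega F q r) /\ connected (dual_ball Omega F q r).
Proof.
move=> _ _ cO [dif [sc _]] q r Hq r0.
have qq : bregman F q q = 0.
  by rewrite bregmanE !subrr /Dd linear0 subr0.
have eqb : forall (a : 'rV[R]_d) l, q + l *: (a - q) = l *: a + (1 - l) *: q.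
  by move=> a l; rewrite scalerBr scalerBl scale1r addrCA addrA.
split.
  apply: (@star_connected _ _ _ q); first by split => //; rewrite qq.
  move=> a l [Ha Da] l0 l1.
  have Hb : Omega (q + l *: (a - q)) by rewrite eqb; exact: conv_mem.
  split => //.
  have [->|ln1] := eqVneq l 1; first by rewrite scale1r addrC subrK.
  have l1' : l < 1 by rewrite lt_neqAle ln1 l1.
  apply: le_trans Da.
  exact: (@primal_step _ _ _ _ _ _ _ sc dif Ha Hb l0 l1').
apply: (@star_connected _ _ _ q); first by split => //; rewrite qq.
move=> a l [Ha Da] l0 l1.
have Hb : Omega (q + l *: (a - q)) by rewrite eqb; exact: conv_mem.
split => //.
exact: (@dual_step _ _ _ _ _ _ _ _ sc Ha Hq l0 l1 r0 Da).
Qed.
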